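(* Let $n,d\in\mathbb{N}_0$, let $\mathcal{P}(n,2d)$ be the set of homogeneous polynomials of degree $2d$ in $\mathbb{R}[x_0,\dots,x_n]$ that are non-negative on $\mathbb{R}^{n+1}$, let $t=(t_\alpha)_{\alpha\in\mathbb{N}_0^{n+1},|\alpha|=2d}$ be real numbers, and let $T$ be the linear map on the space of homogeneous polynomials of degree $2d$ in $x_0,\dots,x_n$ with $Tx^\alpha=t_\alpha x^\alpha$ for all $|\alpha|=2d$. Let $L_t$ be the linear functional on that space with $L_t(x^\alpha)=t_\alpha$. Then $T(\mathcal{P}(n,2d))\subseteq\mathcal{P}(n,2d)$ if and only if $L_t(p)\ge0$ for all $p\in\mathcal{P}(n,2d)$. *)

(* Defs.v *)
From HB Require Import structures.
From mathcomp Require Import all_boot all_order all_algebra.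
From mathcomp Require Import reals.
From mathcomp Require Import mpoly.
Set Implicit Arguments. Unset Strict Implicit. Unset Printing Implicit Defensive.
Import Order.TTheory GRing.Theory Num.Theory.
Local Open Scope ring_scope.

(* Forms in x_0,...,x_n are elements of {mpoly R[n.+1]}; monomials x^alpha
   are 'X_[alpha] with alpha : 'X_{1..n.+1} and |alpha| = mdeg alpha. *)

Definition Pnd (R : realType) (n d : nat) (p : {mpoly R[n.+1]}) : Prop :=
  p \is (2 * d)%N.-homog /\ forall v : 'I_n.+1 -> R, 0 <= p.@[v].

Definition Tdiag (R : realType) (n : nat) (t : 'X_{1..n.+1} -> R)
    (p : {mpoly R[n.+1]}) : {mpoly R[n.+1]} :=
  \sum_(m <- msupp p) (t m * p@_m) *: 'X_[m].

Definition Lt (R : realType) (n : nat) (t : 'X_{1..n.+1} -> R)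
    (p : {mpoly R[n.+1]}) : R :=
  \sum_(m <- msupp p) t m * p@_m.
Arguments Pnd {R} n d p.
Arguments Tdiag {R n} t p.
Arguments Lt {R n} t p.

(* Main.v *)
Require Import Defs.
From HB Require Import structures.
From mathcomp Require Import all_boot all_order all_algebra.
From mathcomp Require Import reals.
From mathcomp Require Import mpoly.
Import Order.TTheory GRing.Theory Num.Theory.
Local Open Scope ring_scope.

Section Aux.
Variables (R : realType) (n : nat).
Implicit Types (p q : {mpoly R[n.+1]}).

Definition G p (c : 'X_{1..n.+1} -> R) : {mpoly R[n.+1]} :=
  \sum_(m <- msupp p) (c m * p@_m) *: 'X_[m].

Lemma G_coeff p c k : (G p c)@_k = c k * p@_k.
Proof.
rewrite /G raddf_sum /=.
case: (boolP (k \in msupp p)) => hk.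
  rewrite (bigD1_seq k) //= mcoeffZ mcoeffX eqxx mulr1 big1 ?addr0 //.
  by move=> i /negbTE ne; rewrite mcoeffZ mcoeffX ne mulr0.
rewrite big_seq big1; last first.
  move=> i hi; rewrite mcoeffZ mcoeffX.
  have -> : (i == k) = false by apply/negbTE; apply: contraNneq hk => <-.
  by rewrite mulr0.
by move: hk; rewrite mcoeff_msupp negbK => /eqP ->; rewrite mulr0.
Qed.

Lemma G_eval p c v :
  (G p c).@[v] = \sum_(m <- msupp p) c m * p@_m * \prod_i v i ^+ m i.
Proof.
rewrite /G (big_morph (meval v) (mevalD v) (meval0 v)).
by apply: eq_bigr => m _; rewrite mevalZ mevalX.
Qed.

Lemma G_homog p c k : p \is k.-homog -> G p c \is k.-homog.
Proof.
move=> hp; rewrite /G big_seq.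
apply: (big_ind (fun q => q \is k.-homog)).
- exact: dhomog0.
- by move=> x y; apply: dhomogD.
move=> m hm; apply: dhomogZ; rewrite dhomogX.
by rewrite (dhomog_mf hp hm).
Qed.

Lemma sum_supp q (F : 'X_{1..n.+1} -> R) (s : seq 'X_{1..n.+1}) :
  uniq s -> {subset msupp q <= s} ->
  \sum_(m <- msupp q) F m * q@_m = \sum_(m <- s) F m * q@_m.
Proof.
move=> us sub.
have pe : perm_eq (msupp q) [seq m <- s | m \in msupp q].
  apply: uniq_perm => //; first exact: filter_uniq.
  by move=> m; rewrite mem_filter; apply/idP/idP => [h|/andP[]//]; rewrite h sub.
rewrite (perm_big _ pe) big_filter big_mkcond /=.
apply: eq_bigr => m _; case: ifP => // /negbT.
by rewrite mcoeff_msupp negbK => /eqP ->; rewrite mulr0.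
Qed.

End Aux.
Arguments G {R n} p c.
Arguments G_coeff {R n} p c k.
Arguments G_eval {R n} p c v.
Arguments G_homog {R n p} c {k}.
Arguments sum_supp {R n} q F {s}.

Theorem mainTheorem7 (R : realType) (n d : nat) (t : 'X_{1..n.+1} -> R) :
  (forall p : {mpoly R[n.+1]}, Pnd n d p -> Pnd n d (Tdiag t p)) <->
  (forall p : {mpoly R[n.+1]}, Pnd n d p -> 0 <= Lt t p).
Proof.
have TG : forall p, Tdiag t p = G p t by [].
split.
  move=> H p hp; have [_ /(_ (fun _ => 1))] := H p hp.
  rewrite TG G_eval /Lt.
  congr (0 <= _); apply: eq_bigr => m _.
  rewrite big1 ?mulr1 // => i _; exact: expr1n.
move=> H p [hh hp]; split; first by rewrite TG; apply: G_homog.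
move=> v.
pose c := fun m : 'X_{1..n.+1} => \prod_i v i ^+ m i.
have hq : Pnd n d (G p c).
  split; first by apply: G_homog.
  move=> x; suff -> : (G p c).@[x] = p.@[fun i => v i * x i] by apply: hp.
  rewrite G_eval mevalE; apply: eq_bigr => m _.
  have -> : \prod_i (v i * x i) ^+ m i = c m * \prod_i x i ^+ m i.
    by rewrite /c -big_split /=; apply: eq_bigr => i _; rewrite exprMn.
  by rewrite [c m * _]mulrC mulrA.
have := H _ hq; rewrite /Lt (sum_supp _ t (msupp_uniq p)); last first.
  by move=> m; rewrite !mcoeff_msupp G_coeff; apply: contra => /eqP ->; rewrite mulr0.
rewrite TG G_eval => h; apply: le_trans h _; rewrite le_eqVlt; apply/orP; left; apply/eqP.
apply: eq_bigr => m _.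
by rewrite G_coeff [c m * _]mulrC mulrA.
Qed.
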